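(* Let $Y$ be a (discrete) groupoid and $\Lambda\subseteq Y$ a subcategory with $Y^0\subseteq\Lambda$. For $t\in Y$, $W_t\in\mathcal W_0$ if and only if there is a finite set $F\subseteq\mathcal Z_\Lambda$ such that (1) for every $\zeta\in F$, $\varphi_\zeta(\beta)=t\beta$ for all $\beta\in A(\zeta)$; and (2) $\{\beta\in\Lambda: r(\beta)=s(t),\ t\beta\in\Lambda\}=\bigcup_{\zeta\in F}A(\zeta)$.
   Context: $\Lambda$ is a left cancellative small category (being a subcategory of a groupoid), composition $\alpha\beta$ defined when $s(\alpha)=r(\beta)$. On $\ell^2(\Lambda)$ with standard basis $\{e_\alpha\}$, for $t\in Y$ let $W_t e_\alpha=e_{t\alpha}$ if $s(t)=r(\alpha)$ and $t\alpha\in\Lambda$, and $W_te_\alpha=0$ otherwise (so $W_t=J^*L_tJ$ with $L$ the left regular representation of $Y$ and $J:\ell^2(\Lambda)\to\ell^2(Y)$ the inclusion). $\mathcal W_0$ is the C*-algebra generated by $\{W_\alpha:\alpha\in\Lambda\}$. For $\alpha\in\Lambda$, $\tau^\alpha(\beta)=\alpha\beta$ on $\{\beta\in\Lambda:r(\beta)=s(\alpha)\}$ and $\sigma^\alpha$ is its inverse on $\alpha\Lambda$. A zigzag is $\zeta=(\alpha_1,\beta_1,\dots,\alpha_n,\beta_n)$, $\alpha_i,\beta_i\in\Lambda$, with $r(\alpha_i)=r(\beta_i)$ and $s(\alpha_{i+1})=s(\beta_i)$; $\mathcal Z_\Lambda$ the set of zigzags; $\varphi_\zeta=\sigma^{\alpha_1}\circ\tau^{\beta_1}\circ\cdots\circ\sigma^{\alpha_n}\circ\tau^{\beta_n}$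 (composition of partial maps) with domain $A(\zeta)$. *)

(* Defs.v *)
From Stdlib Require Import Reals List ClassicalEpsilon.
Import ListNotations.
Open Scope R_scope.

Record Groupoid := {
  gY :> Type;
  gr : gY -> gY;
  gs : gY -> gY;
  gmul : gY -> gY -> gY;       (* x y, meaningful when s x = r y *)
  ginv : gY -> gY;
  g_r_mul : forall x y, gs x = gr y -> gr (gmul x y) = gr x;
  g_s_mul : forall x y, gs x = gr y -> gs (gmul x y) = gs y;
  g_assoc : forall x y z, gs x = gr y -> gs y = gr z ->
              gmul (gmul x y) z = gmul x (gmul y z);
  g_unit_l : forall x, gmul (gr x) x = x;
  g_unit_r : forall x, gmul x (gs x) = x;
  g_r_r : forall x, gr (gr x) = gr x;
  g_s_r : forall x, gs (gr x) = gr x;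
  g_r_s : forall x, gr (gs x) = gs x;
  g_s_s : forall x, gs (gs x) = gs x;
  g_r_inv : forall x, gr (ginv x) = gs x;
  g_s_inv : forall x, gs (ginv x) = gr x;
  g_inv_r : forall x, gmul x (ginv x) = gr x;
  g_inv_l : forall x, gmul (ginv x) x = gs x
}.

Arguments gr {g} x.
Arguments gs {g} x.
Arguments gmul {g} x y.
Arguments ginv {g} x.

Definition Subcat (G : Groupoid) (L : G -> Prop) : Prop :=
  (forall x : G, L (gr x)) /\ (forall x : G, L (gs x)) /\
  (forall x y : G, L x -> L y -> gs x = gr y -> L (gmul x y)).

Record C := mkC { re : R; im : R }.
Definition C0 : C := mkC 0 0.
Definition Cadd (a b : C) : C := mkC (re a + re b) (im a + im b).
Definition Csub (a b : C) : C := mkC (re a - re b) (im a - im b).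
Definition Cmul (a b : C) : C :=
  mkC (re a * re b - im a * im b) (re a * im b + im a * re b).
Definition Cabs2 (a : C) : R := re a * re a + im a * im a.

Definition cif {A : Type} (P : Prop) (a b : A) : A :=
  if excluded_middle_informative P then a else b.

Section L2.
Variable G : Groupoid.
Variable L : G -> Prop.

(** Vectors of ℓ²(Λ): we work on the dense subspace of finitely supported
    vectors v : Y -> C with support contained in Λ. *)
Definition vec := G -> C.

Definition fin_vec (v : vec) : Prop :=
  (exists l : list G, forall y, v y <> C0 -> In y l) /\
  (forall y, v y <> C0 -> L y).

Definition sumsq (l : list G) (v : vec) : R :=
  fold_right (fun y acc => Cabs2 (v y) + acc) 0 l.

Definition norm2_le (v : vec) (c : R) : Prop :=
  exists l : list G, NoDup l /\ (forall y, v y <> C0 -> In y l) /\ sumsq l v <= c.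

(** W_t e_b = e_{t b} if s t = r b and t b ∈ Λ, else 0; i.e.
    (W_t v)(g) = v (t^-1 g) if g ∈ Λ, r g = r t and t^-1 g ∈ Λ, else 0. *)
Definition W (t : G) (v : vec) : vec := fun g =>
  cif (L g /\ gr g = gr t /\ L (gmul (ginv t) g)) (v (gmul (ginv t) g)) C0.

Definition Wadj (t : G) (v : vec) : vec := fun b =>
  cif (L b /\ gr b = gs t /\ L (gmul t b)) (v (gmul t b)) C0.

(** words in the generators W_a, W_a^* (a ∈ Λ); true = W_a, false = W_a^* *)
Definition letter_apply (x : bool * G) (v : vec) : vec :=
  if fst x then W (snd x) v else Wadj (snd x) v.

Definition word_apply (w : list (bool * G)) (v : vec) : vec :=
  fold_right letter_apply v w.

Definition valid_word (w : list (bool * G)) : Prop :=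
  w <> [] /\ forall x, In x w -> L (snd x).

(** elements of the *-algebra generated by {W_a : a ∈ Λ}:
    finite linear combinations of nonempty words *)
Definition lc_apply (P : list (C * list (bool * G))) (v : vec) : vec := fun y =>
  fold_right (fun cw acc => Cadd (Cmul (fst cw) (word_apply (snd cw) v y)) acc) C0 P.

Definition in_star_alg (P : list (C * list (bool * G))) : Prop :=
  forall cw, In cw P -> valid_word (snd cw).

(** W_t ∈ W_0 = norm closure of the *-algebra generated by {W_a : a ∈ Λ}.
    The operator norm ||W_t - P|| <= eps is expressed as
    ||(W_t - P) v|| <= eps for all finitely supported v with ||v|| <= 1. *)
Definition in_W0 (t : G) : Prop :=
  forall eps, 0 < eps ->
  exists P, in_star_alg P /\
    forall v, fin_vec v -> norm2_le v 1 ->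
      norm2_le (fun y => Csub (W t v y) (lc_apply P v y)) (eps * eps).

(** τ^b(x) = b x on {x ∈ Λ : r x = s b}, as a relation x ↦ y *)
Definition tau (b : G) (x y : G) : Prop := L x /\ gr x = gs b /\ y = gmul b x.
Definition sigma (a : G) (y x : G) : Prop := tau a x y.

(** a zigzag (a1,b1,...,an,bn) is encoded as [(a1,b1); ...; (an,bn)], n >= 1 *)
Fixpoint zz_cond (z : list (G * G)) : Prop :=
  match z with
  | [] => True
  | (a, b) :: rest =>
      L a /\ L b /\ gr a = gr b /\
      match rest with
      | [] => True
      | (a', _) :: _ => gs a' = gs b
      end /\ zz_cond rest
  end.

Definition zigzag (z : list (G * G)) : Prop := z <> [] /\ zz_cond z.

(** φ_ζ = σ^{a1} ∘ τ^{b1} ∘ ... ∘ σ^{an} ∘ τ^{bn} (partial maps, as relations) *)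
Fixpoint phi (z : list (G * G)) (x y : G) : Prop :=
  match z with
  | [] => x = y
  | (a, b) :: rest => exists u v, phi rest x u /\ tau b u v /\ sigma a v y
  end.

Definition Adom (z : list (G * G)) (x : G) : Prop := exists y, phi z x y.

End L2.

(* Main.v *)
Require Import Defs.
From Stdlib Require Import Reals List Lra ClassicalEpsilon Classical.
Import ListNotations.
Import Defs.
Open Scope R_scope.

Lemma Ceq (a b : C) : re a = re b -> im a = im b -> a = b.
Proof. destruct a, b; simpl; intros; subst; reflexivity. Qed.

Lemma cif_T {A} (P : Prop) (a b : A) : P -> cif P a b = a.
Proof. unfold cif; destruct excluded_middle_informative; tauto. Qed.
Lemma cif_F {A} (P : Prop) (a b : A) : ~P -> cif P a b = b.
Proof. unfold cif; destruct excluded_middle_informative; tauto. Qed.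

Definition Cneg (c : C) : C := mkC (- re c) (- im c).
Definition C1 : C := mkC 1 0.

Section S.
Variable G : Groupoid.
Variable L : G -> Prop.
Hypothesis HL : Subcat G L.
Variable t : G.

Lemma gl1 (b u : G) : gs b = gr u -> gmul (ginv b) (gmul b u) = u.
Proof.
  intros H. rewrite <- g_assoc by (rewrite ?g_s_inv; auto).
  rewrite g_inv_l, H. apply g_unit_l.
Qed.

Lemma gl2 (b v : G) : gr v = gr b -> gmul b (gmul (ginv b) v) = v.
Proof.
  intros H. rewrite <- g_assoc by (rewrite ?g_r_inv, ?g_s_inv; auto).
  rewrite g_inv_r, <- H. apply g_unit_l.
Qed.

Definition lp (l : bool * G) (y : G) : option G :=
  if fst l then cif (L y /\ gr y = gr (snd l) /\ L (gmul (ginv (snd l)) y))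
                    (Some (gmul (ginv (snd l)) y)) None
  else cif (L y /\ gr y = gs (snd l) /\ L (gmul (snd l) y)) (Some (gmul (snd l) y)) None.

Fixpoint wpull (w : list (bool * G)) (y : G) : option G :=
  match w with
  | [] => Some y
  | l :: w' => match lp l y with Some z => wpull w' z | None => None end
  end.

Lemma letter_pull l f y :
  letter_apply G L l f y = match lp l y with Some x => f x | None => C0 end.
Proof.
  destruct l as [[|] a]; unfold letter_apply, W, Wadj, lp, cif; simpl;
  destruct excluded_middle_informative; reflexivity.
Qed.

Lemma word_pull w f y :
  word_apply G L w f y = match wpull w y with Some x => f x | None => C0 end.
Proof.
  revert y; induction w as [|l w IH]; intros y; simpl; auto.
  unfold word_apply; simpl; fold (word_apply G L w f).
  rewrite letter_pull. destruct (lp l y); auto.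
Qed.

Lemma wpull_cons l w y x :
  wpull (l :: w) y = Some x <-> exists z, lp l y = Some z /\ wpull w z = Some x.
Proof.
  simpl. destruct (lp l y) as [z|]; split; intros H.
  - eauto.
  - destruct H as [z' [E H]]; inversion E; subst; auto.
  - discriminate.
  - destruct H as [z' [E H]]; discriminate.
Qed.

Lemma wpull_app w1 w2 y :
  wpull (w1 ++ w2) y = match wpull w1 y with Some z => wpull w2 z | None => None end.
Proof.
  revert y; induction w1 as [|l w IH]; intros y; simpl; auto.
  destruct (lp l y); auto.
Qed.

Lemma lpF a y v : lp (false, a) y = Some v <-> L y /\ gr y = gs a /\ L (gmul a y) /\ v = gmul a y.
Proof.
  unfold lp, cif; simpl; destruct excluded_middle_informative as [H|H]; split; intros E.
  - inversion E; subst; tauto.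
  - destruct E as [? [? [? ->]]]; auto.
  - discriminate.
  - exfalso; tauto.
Qed.

Lemma lpT b v u : lp (true, b) v = Some u <->
  L v /\ gr v = gr b /\ L (gmul (ginv b) v) /\ u = gmul (ginv b) v.
Proof.
  unfold lp, cif; simpl; destruct excluded_middle_informative as [H|H]; split; intros E.
  - inversion E; subst; tauto.
  - destruct E as [? [? [? ->]]]; auto.
  - discriminate.
  - exfalso; tauto.
Qed.

Lemma lemA a v y : (sigma G L a v y /\ L v) <-> lp (false, a) y = Some v.
Proof.
  rewrite lpF. unfold sigma, tau. split.
  - intros [[? [? ->]] ?]; auto.
  - intros [? [? [? ->]]]; auto.
Qed.

Lemma lemB b u v : (tau G L b u v /\ L v) <-> lp (true, b) v = Some u.
Proof.
  rewrite lpT. unfold tau. split.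
  - intros [[Hu [Hr ->]] Hv]. rewrite g_r_mul by auto. rewrite gl1 by auto. auto.
  - intros [Hv [Hr [Hu ->]]]. repeat split; auto.
    + rewrite g_r_mul by (rewrite g_s_inv; auto). apply g_r_inv.
    + rewrite gl2; auto.
Qed.


Fixpoint conv (w : list (bool * G)) : list (G * G) :=
  match w with
  | [] => []
  | (true, b) :: w' => (gr b, b) :: conv w'
  | (false, a) :: w' =>
      match w' with
      | (true, b) :: w'' => (a, b) :: conv w''
      | _ => (a, gr a) :: conv w'
      end
  end.

Lemma conv_F a w : (forall b w', w <> (true, b) :: w') -> conv ((false, a) :: w) = (a, gr a) :: conv w.
Proof.
  intros H. destruct w as [|[[|] c] w']; simpl; auto.
  exfalso; eapply H; reflexivity.
Qed.

Lemma conv_ind (P : list (bool * G) -> Prop) :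
  P [] ->
  (forall b w, P w -> P ((true, b) :: w)) ->
  (forall a b w, P w -> P ((false, a) :: (true, b) :: w)) ->
  (forall a w, (forall b w', w <> (true, b) :: w') -> P w -> P ((false, a) :: w)) ->
  forall w, P w.
Proof.
  intros H0 HT HFT HF w.
  assert (H : P w /\ forall l, P (l :: w)).
  { induction w as [|x w [IH1 IH2]].
    - split; auto. intros [[|] c]. apply HT; auto. apply HF; auto. intros b w' E; discriminate.
    - split; auto. intros [[|] c]. apply HT; auto. destruct x as [[|] d].
      + apply HFT; auto.
      + apply HF; auto. intros b w' E; discriminate. }
  tauto.
Qed.

Definition letL (w : list (bool * G)) : Prop := forall l, In l w -> L (snd l).

Lemma conv_phi : forall w, letL w -> forall x y,
  phi G L (conv w) x y <-> wpull w y = Some x.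
Proof.
  destruct HL as [HLr [HLs HLm]].
  apply (conv_ind (fun w => letL w -> forall x y, phi G L (conv w) x y <-> wpull w y = Some x)).
  - intros _ x y; simpl; split; intros; congruence.
  - intros b w IH Hw x y. simpl conv. rewrite wpull_cons. simpl.
    assert (Hw' : letL w) by (intros l Hl; apply Hw; simpl; auto).
    split.
    + intros [u [v [Hp [Ht Hs]]]].
      unfold sigma, tau in Hs. destruct Hs as [Ly [Hry Hv]].
      rewrite g_s_r in Hry. rewrite <- Hry, g_unit_l in Hv. subst v.
      exists u; split. apply lemB; auto. apply IH; auto.
    + intros [u [Hl Hp]]. apply lemB in Hl. destruct Hl as [Ht Ly].
      exists u, y. split. apply IH; auto. split; auto.
      unfold sigma, tau. destruct Ht as [Lu [Hru Hy]].
      rewrite g_s_r. assert (gr y = gr b) by (rewrite Hy, g_r_mul; auto).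
      repeat split; auto. rewrite <- H, g_unit_l; auto.
  - intros a b w IH Hw x y. simpl conv. rewrite wpull_cons. cbn [phi].
    assert (Hw' : letL w) by (intros l Hl; apply Hw; simpl; auto).
    assert (La : L a) by (apply (Hw (false, a)); simpl; auto).
    assert (Lb : L b) by (apply (Hw (true, b)); simpl; auto).
    split.
    + intros [u [v [Hp [Ht Hs]]]].
      assert (Lv : L v).
      { destruct Ht as [Lu [Hru ->]]. apply HLm; auto. }
      exists v. split. apply lemA; auto. rewrite wpull_cons. exists u. split.
      apply lemB; auto. apply IH; auto.
    + intros [v [Hv Hr]]. rewrite wpull_cons in Hr. destruct Hr as [u [Hu Hr]].
      apply lemA in Hv. apply lemB in Hu. exists u, v. split. apply IH; auto. tauto.
  - intros a w Hnt IH Hw x y. rewrite conv_F by auto. rewrite wpull_cons. simpl.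
    assert (Hw' : letL w) by (intros l Hl; apply Hw; simpl; auto).
    split.
    + intros [u [v [Hp [Ht Hs]]]].
      destruct Ht as [Lu [Hru Hv]]. rewrite g_s_r in Hru. rewrite <- Hru, g_unit_l in Hv.
      subst v. exists u. split. apply lemA; auto. apply IH; auto.
    + intros [u [Hu Hp]]. apply lemA in Hu. destruct Hu as [Hs Lu].
      exists u, u. split. apply IH; auto. split; auto.
      unfold tau. destruct Hs as [Ly [Hry Hu]].
      assert (gr u = gr a) by (rewrite Hu, g_r_mul; auto).
      rewrite g_s_r. repeat split; auto. rewrite <- H, g_unit_l; auto.
Qed.

Lemma conv_nil w : w <> [] -> conv w <> [].
Proof.
  destruct w as [|[[|] a] w]; simpl; try congruence.
  destruct w as [|[[|] c] w']; simpl; congruence.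
Qed.

Lemma conv_L : forall w, letL w -> forall p, In p (conv w) -> L (fst p) /\ L (snd p).
Proof.
  destruct HL as [HLr [HLs HLm]].
  apply (conv_ind (fun w => letL w -> forall p, In p (conv w) -> L (fst p) /\ L (snd p))).
  - simpl; tauto.
  - intros b w IH Hw p Hp. simpl in Hp.
    assert (Hw' : letL w) by (intros l Hl; apply Hw; simpl; auto).
    destruct Hp as [<-|Hp]; auto. simpl. split; auto. apply (Hw (true, b)); simpl; auto.
  - intros a b w IH Hw p Hp. simpl in Hp.
    assert (Hw' : letL w) by (intros l Hl; apply Hw; simpl; auto).
    destruct Hp as [<-|Hp]; auto. simpl. split.
    apply (Hw (false, a)); simpl; auto. apply (Hw (true, b)); simpl; auto.
  - intros a w Hnt IH Hw p Hp. rewrite conv_F in Hp by auto. simpl in Hp.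
    assert (Hw' : letL w) by (intros l Hl; apply Hw; simpl; auto).
    destruct Hp as [<-|Hp]; auto. simpl. split; auto. apply (Hw (false, a)); simpl; auto.
Qed.

Lemma pair_step a b u v y : tau G L b u v -> sigma G L a v y ->
  gr a = gr b /\ y = gmul (ginv a) (gmul b u) /\ gr u = gs b /\ L u /\ L y.
Proof.
  unfold sigma, tau. intros [Lu [Hru Hv]] [Ly [Hry Hv']].
  assert (gr v = gr b) by (rewrite Hv, g_r_mul; auto).
  assert (gr v = gr a) by (rewrite Hv', g_r_mul; auto).
  repeat split; auto. congruence. rewrite <- Hv, Hv', gl1; auto.
Qed.

Lemma rigid : forall z, z <> [] -> exists g, forall x y, phi G L z x y -> gr x = gs g /\ y = gmul g x.
Proof.
  induction z as [|[a b] rest IH]; intros Hz; [congruence|].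
  destruct rest as [|p rest'].
  - exists (gmul (ginv a) b). intros x y [u [v [Hp [Ht Hs]]]]. simpl in Hp. subst u.
    destruct (pair_step _ _ _ _ _ Ht Hs) as [Hab [Hy [Hrx _]]].
    rewrite g_s_mul by (rewrite g_s_inv; auto).
    split; auto. rewrite g_assoc; auto. rewrite g_s_inv; auto.
  - destruct IH as [h Hh]; [congruence|].
    exists (gmul (ginv a) (gmul b h)). intros x y [u [v [Hp [Ht Hs]]]].
    destruct (Hh _ _ Hp) as [Hrx Hu].
    destruct (pair_step _ _ _ _ _ Ht Hs) as [Hab [Hy [Hru _]]].
    assert (Hbh : gs b = gr h) by (rewrite <- Hru, Hu, g_r_mul; auto).
    rewrite g_s_mul by (rewrite g_s_inv, g_r_mul; auto).
    rewrite g_s_mul by auto. split; auto.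
    rewrite g_assoc by (rewrite ?g_s_inv, ?g_r_mul, ?g_s_mul; auto).
    rewrite g_assoc by auto. rewrite Hy, Hu; auto.
Qed.

Lemma phi_zz : forall z, (forall p, In p z -> L (fst p) /\ L (snd p)) ->
  forall x y, phi G L z x y -> zz_cond G L z.
Proof.
  induction z as [|[a b] rest IH]; intros Hz x y Hp; simpl; auto.
  destruct Hp as [u [v [Hp [Ht Hs]]]].
  destruct (pair_step _ _ _ _ _ Ht Hs) as [Hab [_ [Hru _]]].
  destruct (Hz (a, b)) as [La Lb]; simpl; auto.
  repeat split; auto.
  - destruct rest as [|[a' b'] rest']; auto.
    destruct Hp as [u' [v' [_ [_ Hs']]]]. destruct Hs' as [_ [Hr' _]]. congruence.
  - eapply IH; eauto. intros p Hp'; apply Hz; simpl; auto.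
Qed.

Lemma phi_L : forall z, z <> [] -> forall x y, phi G L z x y -> L x /\ L y.
Proof.
  induction z as [|[a b] rest IH]; intros Hz x y Hp; [congruence|].
  destruct Hp as [u [v [Hp [Ht Hs]]]].
  destruct (pair_step _ _ _ _ _ Ht Hs) as [_ [_ [_ [Lu Ly]]]].
  split; auto. destruct rest as [|p r].
  - simpl in Hp; subst; auto.
  - apply (IH ltac:(congruence) x u Hp).
Qed.

Definition zzw (z : list (G * G)) : list (bool * G) :=
  flat_map (fun p => [(false, fst p); (true, snd p)]) z.

Lemma conv_zzw z : conv (zzw z) = z.
Proof. induction z as [|[a b] r IH]; simpl; auto. rewrite IH; auto. Qed.

Definition flipl (l : bool * G) : bool * G := (negb (fst l), snd l).
Definition adjw (w : list (bool * G)) := rev (map flipl w).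

Lemma lp_flip l y x : lp (flipl l) y = Some x <-> lp l x = Some y.
Proof.
  destruct l as [[|] a]; unfold flipl; simpl.
  - rewrite lpF, lpT. split.
    + intros [Ly [Hr [Lx ->]]]. rewrite g_r_mul by auto. rewrite gl1 by auto. auto.
    + intros [Lx [Hr [Ly ->]]]. repeat split; auto.
      * rewrite g_r_mul by (rewrite g_s_inv; auto). apply g_r_inv.
      * rewrite gl2; auto.
      * rewrite gl2; auto.
  - rewrite lpF, lpT. split.
    + intros [Ly [Hr [Lx ->]]]. repeat split; auto.
      * rewrite g_r_mul by (rewrite g_s_inv; auto). apply g_r_inv.
      * rewrite gl2; auto.
      * rewrite gl2; auto.
    + intros [Lx [Hr [Ly ->]]]. rewrite g_r_mul by auto. rewrite gl1 by auto. auto.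
Qed.

Lemma adjw_pull w x y : wpull (adjw w) x = Some y <-> wpull w y = Some x.
Proof.
  revert x y; induction w as [|l w IH]; intros x y; simpl.
  - split; congruence.
  - unfold adjw; simpl. rewrite wpull_app. fold (adjw w).
    split.
    + intros H. destruct (wpull (adjw w) x) as [z|] eqn:E; [|discriminate].
      simpl in H. destruct (lp (flipl l) z) eqn:E2; [|discriminate]. inversion H; subst.
      apply (proj1 (lp_flip l _ _)) in E2. simpl. rewrite E2. apply IH; auto.
    + intros H. destruct (lp l y) as [z|] eqn:E; [|discriminate].
      apply IH in H. rewrite H. simpl. apply (proj2 (lp_flip l _ _)) in E. rewrite E; auto.
Qed.

Definition Ew z := adjw (zzw z) ++ zzw z.

Definition lneg (P : list (C * list (bool * G))) := map (fun cw => (Cneg (fst cw), snd cw)) P.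
Definition lpre w (P : list (C * list (bool * G))) := map (fun cw => (fst cw, w ++ snd cw)) P.

Fixpoint Rl (F : list (list (G * G))) : list (C * list (bool * G)) :=
  match F with
  | [] => []
  | z :: F' => (C1, Ew z) :: Rl F' ++ lneg (lpre (Ew z) (Rl F'))
  end.

Fixpoint Ql (F : list (list (G * G))) : list (C * list (bool * G)) :=
  match F with
  | [] => []
  | z :: F' => (C1, zzw z) :: Ql F' ++ lneg (lpre (zzw z) (Rl F'))
  end.

Lemma lc_app P P' f y : lc_apply G L (P ++ P') f y = Cadd (lc_apply G L P f y) (lc_apply G L P' f y).
Proof.
  induction P as [|cw P IH]; simpl.
  - apply Ceq; simpl; ring.
  - unfold lc_apply in *; simpl. rewrite IH. apply Ceq; simpl; ring.
Qed.

Lemma lc_neg P f y : lc_apply G L (lneg P) f y = Cneg (lc_apply G L P f y).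
Proof.
  induction P as [|cw P IH]; simpl.
  - apply Ceq; simpl; ring.
  - unfold lc_apply in *; simpl. rewrite IH. apply Ceq; simpl; ring.
Qed.

Lemma lc_pre w P f y : lc_apply G L (lpre w P) f y = word_apply G L w (lc_apply G L P f) y.
Proof.
  rewrite word_pull. destruct (wpull w y) as [x|] eqn:E.
  - induction P as [|cw P IH]; simpl; auto.
    unfold lc_apply in *; simpl. rewrite IH. f_equal. f_equal.
    unfold word_apply. rewrite fold_right_app. fold (word_apply G L (snd cw) f).
    fold (word_apply G L w (word_apply G L (snd cw) f)). rewrite word_pull, E; auto.
  - induction P as [|cw P IH]; simpl; auto.
    unfold lc_apply in *; simpl. rewrite IH.
    unfold word_apply. rewrite fold_right_app. fold (word_apply G L (snd cw) f).
    fold (word_apply G L w (word_apply G L (snd cw) f)). rewrite word_pull, E.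
    apply Ceq; simpl; ring.
Qed.

Definition good (z : list (G * G)) : Prop :=
  forall b y, phi G L z b y -> gr b = gs t /\ y = gmul t b.
Definition Kz z y := exists x, phi G L z x y.

Lemma zz_letters z : zz_cond G L z -> letL (zzw z).
Proof.
  induction z as [|[a b] r IH]; simpl; intros H l Hl; [tauto|].
  destruct H as [La [Lb [_ [_ Hr]]]].
  destruct Hl as [<-|[<-|Hl]]; simpl; auto. apply IH; auto.
Qed.

Lemma V_sem z f y : zz_cond G L z -> good z ->
  word_apply G L (zzw z) f y = cif (Kz z y) (f (gmul (ginv t) y)) C0.
Proof.
  intros Hz Hg. rewrite word_pull.
  destruct (wpull (zzw z) y) as [x|] eqn:E.
  - assert (Hp : phi G L z x y).
    { rewrite <- (conv_zzw z). apply conv_phi; auto. apply zz_letters; auto. }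
    rewrite cif_T by (exists x; auto).
    destruct (Hg _ _ Hp) as [Hr ->]. rewrite gl1; auto.
  - rewrite cif_F; auto. intros [x Hp].
    rewrite <- (conv_zzw z) in Hp. apply conv_phi in Hp; [congruence|]. apply zz_letters; auto.
Qed.

Lemma E_sem z f x : zz_cond G L z ->
  word_apply G L (Ew z) f x = cif (Adom G L z x) (f x) C0.
Proof.
  intros Hz. rewrite word_pull. unfold Ew. rewrite wpull_app.
  assert (Hc : forall x y, phi G L z x y <-> wpull (zzw z) y = Some x).
  { intros. rewrite <- (conv_zzw z) at 1. apply conv_phi. apply zz_letters; auto. }
  destruct (wpull (adjw (zzw z)) x) as [y|] eqn:E.
  - apply (proj1 (adjw_pull _ _ _)) in E. rewrite E. rewrite cif_T; auto. exists y. apply Hc; auto.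
  - rewrite cif_F; auto. intros [y Hp]. apply Hc in Hp. apply (proj2 (adjw_pull _ _ _)) in Hp. congruence.
Qed.

Lemma R_sem F f x : (forall z, In z F -> zz_cond G L z) ->
  lc_apply G L (Rl F) f x = cif (exists z, In z F /\ Adom G L z x) (f x) C0.
Proof.
  revert x; induction F as [|z F IH]; intros x HF; simpl.
  - rewrite cif_F; auto. intros [z [[] _]].
  - unfold lc_apply at 1; simpl. fold (lc_apply G L (Rl F ++ lneg (lpre (Ew z) (Rl F))) f x).
    assert (Hz : zz_cond G L z) by (apply HF; simpl; auto).
    assert (HF' : forall z, In z F -> zz_cond G L z) by (intros; apply HF; simpl; auto).
    rewrite lc_app, lc_neg, lc_pre, !(E_sem z) by exact Hz.
    rewrite !IH by exact HF'.
    assert (Hiff : (exists z0, (z = z0 \/ In z0 F) /\ Adom G L z0 x) <->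
                   Adom G L z x \/ (exists z0, In z0 F /\ Adom G L z0 x)).
    { split. intros [z0 [[<-|Hi] Ha]]; eauto. intros [Ha|[z0 [Hi Ha]]]; eauto. }
    revert Hiff.
    generalize (exists z0, (z = z0 \/ In z0 F) /\ Adom G L z0 x) as A3.
    generalize (exists z0, In z0 F /\ Adom G L z0 x) as A2.
    generalize (Adom G L z x) as A1. intros A1 A2 A3 Hiff.
    destruct (classic A1) as [h1|h1]; [rewrite !(cif_T A1) by exact h1 | rewrite !(cif_F A1) by exact h1];
    (destruct (classic A2) as [h2|h2]; [rewrite !(cif_T A2) by exact h2 | rewrite !(cif_F A2) by exact h2]);
    (destruct (classic A3) as [h3|h3]; [rewrite !(cif_T A3) by exact h3 | rewrite !(cif_F A3) by exact h3]);
    try tauto; apply Ceq; simpl; ring.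
Qed.

Lemma K_iff z y : good z -> gr y = gr t -> (Kz z y <-> Adom G L z (gmul (ginv t) y)).
Proof.
  intros Hg Hr. split.
  - intros [x Hp]. destruct (Hg _ _ Hp) as [Hx ->]. rewrite gl1 by auto. exists (gmul t x); auto.
  - intros [y' Hp]. destruct (Hg _ _ Hp) as [Hx ->]. rewrite gl2 in Hp by auto.
    exists (gmul (ginv t) y); auto.
Qed.

Lemma Q_sem F f y : (forall z, In z F -> zz_cond G L z /\ good z) ->
  lc_apply G L (Ql F) f y = cif (exists z, In z F /\ Kz z y) (f (gmul (ginv t) y)) C0.
Proof.
  induction F as [|z F IH]; intros HF; simpl.
  - rewrite cif_F; auto. intros [z [[] _]].
  - unfold lc_apply at 1; simpl. fold (lc_apply G L (Ql F ++ lneg (lpre (zzw z) (Rl F))) f y).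
    assert (Hz : zz_cond G L z /\ good z) by (apply HF; simpl; auto).
    assert (HF' : forall z, In z F -> zz_cond G L z /\ good z) by (intros; apply HF; simpl; auto).
    rewrite lc_app, lc_neg, lc_pre, !(V_sem z) by tauto.
    rewrite IH by exact HF'.
    rewrite R_sem by (intros; apply HF'; auto).
    assert (Hiff : (exists z0, (z = z0 \/ In z0 F) /\ Kz z0 y) <->
                   Kz z y \/ (exists z0, In z0 F /\ Kz z0 y)).
    { split. intros [z0 [[<-|Hi] Ha]]; eauto. intros [Ha|[z0 [Hi Ha]]]; eauto. }
    assert (Himp : Kz z y -> ((exists z0, In z0 F /\ Adom G L z0 (gmul (ginv t) y)) <->
                              (exists z0, In z0 F /\ Kz z0 y))).
    { intros [x Hp]. destruct Hz as [_ Hg]. destruct (Hg _ _ Hp) as [Hx Hy].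
      assert (Hr : gr y = gr t) by (rewrite Hy, g_r_mul; auto).
      split; intros [z0 [Hi Ha]]; exists z0; split; auto; apply K_iff; auto; apply HF'; auto. }
    revert Hiff Himp.
    generalize (exists z0, In z0 F /\ Adom G L z0 (gmul (ginv t) y)) as A4.
    generalize (exists z0, (z = z0 \/ In z0 F) /\ Kz z0 y) as A3.
    generalize (exists z0, In z0 F /\ Kz z0 y) as A2.
    generalize (Kz z y) as A1. intros A1 A2 A3 A4 Hiff Himp.
    destruct (classic A1) as [h1|h1]; [rewrite ?(cif_T A1) by exact h1 | rewrite ?(cif_F A1) by exact h1];
    (destruct (classic A2) as [h2|h2]; [rewrite ?(cif_T A2) by exact h2 | rewrite ?(cif_F A2) by exact h2]);
    (destruct (classic A3) as [h3|h3]; [rewrite ?(cif_T A3) by exact h3 | rewrite ?(cif_F A3) by exact h3]);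
    (destruct (classic A4) as [h4|h4]; [rewrite ?(cif_T A4) by exact h4 | rewrite ?(cif_F A4) by exact h4]);
    try tauto; apply Ceq; simpl; ring.
Qed.

Lemma zzw_valid z : zigzag G L z -> valid_word G L (zzw z).
Proof.
  intros [Hne Hz]. split.
  - destruct z as [|[a b] r]; simpl; congruence.
  - apply zz_letters; auto.
Qed.

Lemma Ew_valid z : zigzag G L z -> valid_word G L (Ew z).
Proof.
  intros Hz. destruct (zzw_valid z Hz) as [Hne Hl]. split.
  - unfold Ew. intros E. apply app_eq_nil in E. tauto.
  - unfold Ew. intros x Hx. apply in_app_iff in Hx. destruct Hx as [Hx|Hx]; auto.
    unfold adjw in Hx. apply in_rev in Hx. apply in_map_iff in Hx.
    destruct Hx as [l [<- Hl2]]. simpl. apply (Hl l); auto.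
Qed.

Lemma lpre_valid w P : valid_word G L w -> in_star_alg G L P -> in_star_alg G L (lpre w P).
Proof.
  intros [Hne Hl] HP cw Hcw. unfold lpre in Hcw. apply in_map_iff in Hcw.
  destruct Hcw as [cw0 [<- Hin]]. simpl. split.
  - intros E. apply app_eq_nil in E. tauto.
  - intros x Hx. apply in_app_iff in Hx. destruct Hx as [Hx|Hx]; auto. apply (HP cw0); auto.
Qed.

Lemma lneg_valid P : in_star_alg G L P -> in_star_alg G L (lneg P).
Proof.
  intros HP cw Hcw. unfold lneg in Hcw. apply in_map_iff in Hcw.
  destruct Hcw as [cw0 [<- Hin]]. simpl. apply (HP cw0 Hin).
Qed.

Lemma app_valid P P' : in_star_alg G L P -> in_star_alg G L P' -> in_star_alg G L (P ++ P').
Proof. intros H H' cw Hcw. apply in_app_iff in Hcw. destruct Hcw; auto. Qed.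

Lemma RQ_valid F : (forall z, In z F -> zigzag G L z) ->
  in_star_alg G L (Rl F) /\ in_star_alg G L (Ql F).
Proof.
  induction F as [|z F IH]; intros HF; simpl.
  - split; intros cw [].
  - assert (Hz : zigzag G L z) by (apply HF; simpl; auto).
    destruct IH as [IR IQ]; [intros; apply HF; simpl; auto|].
    split; intros cw [<-|Hcw]; simpl.
    + apply Ew_valid; auto.
    + revert cw Hcw. apply app_valid; auto. apply lneg_valid, lpre_valid; auto. apply Ew_valid; auto.
    + apply zzw_valid; auto.
    + revert cw Hcw. apply app_valid; auto. apply lneg_valid, lpre_valid; auto. apply zzw_valid; auto.
Qed.

Lemma dir2 : (exists F : list (list (G * G)),
    (forall z, In z F -> zigzag G L z) /\
    (forall z, In z F -> forall b y, phi G L z b y -> gr b = gs t /\ y = gmul t b) /\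
    (forall b, (L b /\ gr b = gs t /\ L (gmul t b)) <->
               exists z, In z F /\ Adom G L z b)) -> in_W0 G L t.
Proof.
  intros [F [H1 [H2 H3]]].
  assert (HF : forall z, In z F -> zz_cond G L z /\ good z).
  { intros z Hz. split. apply H1; auto. intros b y; apply H2; auto. }
  assert (Weq : forall f y, W G L t f y = lc_apply G L (Ql F) f y).
  { intros f y. rewrite Q_sem by auto. unfold W.
    destruct (classic (exists z, In z F /\ Kz z y)) as [Hk|Hk].
    - rewrite (cif_T (exists z, _)) by auto. apply cif_T.
      destruct Hk as [z [Hi [x Hp]]]. destruct (HF z Hi) as [_ Hg].
      destruct (Hg _ _ Hp) as [Hx Hy].
      destruct (proj2 (H3 x)) as [Lx [_ Ltx]]. exists z; split; auto. exists y; auto.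
      subst y. rewrite gl1 by auto. repeat split; auto. rewrite g_r_mul; auto.
    - rewrite (cif_F (exists z, _)) by auto. apply cif_F.
      intros [Ly [Hr Lb]]. apply Hk.
      assert (Hrb : gr (gmul (ginv t) y) = gs t).
      { rewrite g_r_mul by (rewrite g_s_inv; auto). apply g_r_inv. }
      destruct (proj1 (H3 (gmul (ginv t) y))) as [z [Hi Ha]].
      { repeat split; auto. rewrite gl2; auto. }
      exists z; split; auto. apply K_iff; auto. apply HF; auto. }
  intros eps Heps. exists (Ql F). split.
  - apply RQ_valid; auto.
  - intros v _ _. exists []. split; [constructor|]. split.
    + intros y Hy. cbv beta in Hy. rewrite Weq in Hy. apply Hy. apply Ceq; simpl; ring.
    + simpl. nra.
Qed.

Lemma gl3 (g b : G) : gs g = gr b -> gmul (gmul g b) (ginv b) = g.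
Proof.
  intros H. rewrite g_assoc by (rewrite ?g_r_inv; auto).
  rewrite g_inv_r, <- H. apply g_unit_r.
Qed.

Lemma Cabs2_nonneg c : 0 <= Cabs2 c.
Proof. unfold Cabs2. nra. Qed.

Lemma sumsq_nonneg l d : 0 <= sumsq G l d.
Proof. induction l; simpl. lra. pose proof (Cabs2_nonneg (d a)). lra. Qed.

Lemma sumsq_ge l d y : In y l -> Cabs2 (d y) <= sumsq G l d.
Proof.
  induction l as [|a l IH]; simpl; intros H; [tauto|].
  destruct H as [->|H].
  - pose proof (sumsq_nonneg l d); lra.
  - pose proof (Cabs2_nonneg (d a)); specialize (IH H); lra.
Qed.

Lemma lc_zero P f y : (forall cw, In cw P -> forall x, wpull (snd cw) y = Some x -> f x = C0) ->
  lc_apply G L P f y = C0.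
Proof.
  induction P as [|cw P IH]; intros H; simpl; auto.
  unfold lc_apply in *; simpl. rewrite IH by (intros c Hc x0 E0; eapply (H c); [right; exact Hc | exact E0]).
  rewrite word_pull. destruct (wpull (snd cw) y) as [x|] eqn:E.
  - rewrite (H cw (or_introl eq_refl) x E). apply Ceq; simpl; ring.
  - apply Ceq; simpl; ring.
Qed.

Lemma dir1 : in_W0 G L t -> exists F : list (list (G * G)),
    (forall z, In z F -> zigzag G L z) /\
    (forall z, In z F -> forall b y, phi G L z b y -> gr b = gs t /\ y = gmul t b) /\
    (forall b, (L b /\ gr b = gs t /\ L (gmul t b)) <->
               exists z, In z F /\ Adom G L z b).
Proof.
  intros H. destruct (H (1/2)) as [P [HPa HP]]; [lra|].
  assert (Key : forall b, L b -> gr b = gs t -> L (gmul t b) ->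
            exists cw, In cw P /\ wpull (snd cw) (gmul t b) = Some b).
  { intros b Lb Hrb Ltb. apply NNPP; intros Hn.
    set (v := fun x : G => cif (x = b) C1 C0).
    assert (Hv : forall y, v y <> C0 -> y = b).
    { intros y Hy. destruct (classic (y = b)) as [E|E]; auto.
      unfold v in Hy. rewrite cif_F in Hy by auto. congruence. }
    assert (Hfin : fin_vec G L v).
    { split. exists [b]. intros y Hy. left; symmetry; auto.
      intros y Hy. rewrite (Hv y Hy); auto. }
    assert (Hn1 : norm2_le G v 1).
    { exists [b]. split. constructor; [intros []|constructor].
      split. intros y Hy; left; symmetry; auto.
      unfold sumsq; simpl. unfold v; rewrite cif_T by reflexivity. unfold Cabs2; simpl; lra. }
    destruct (HP v Hfin Hn1) as [l [Hnd [Hsup Hsum]]].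
    assert (HW : W G L t v (gmul t b) = C1).
    { unfold W. rewrite cif_T.
      - rewrite gl1 by auto. unfold v; apply cif_T; auto.
      - rewrite gl1 by auto. repeat split; auto. rewrite g_r_mul; auto. }
    assert (HPz : lc_apply G L P v (gmul t b) = C0).
    { apply lc_zero. intros cw Hcw x Ex. unfold v. apply cif_F. intros E. subst x. apply Hn. exists cw; auto. }
    assert (Hin : In (gmul t b) l).
    { apply Hsup. cbv beta. rewrite HW, HPz. unfold C1, C0, Csub. simpl. intros E.
      inversion E. lra. }
    pose proof (sumsq_ge l (fun y : G => Csub (W G L t v y) (lc_apply G L P v y)) _ Hin) as Hge. cbv beta in Hge. rewrite HW, HPz in Hge.
    assert (E1 : Cabs2 (Csub C1 C0) = 1) by (unfold Cabs2, Csub, C1, C0; simpl; ring).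
    rewrite E1 in Hge. lra. }
  set (F := filter (fun z => if excluded_middle_informative (zigzag G L z /\ good z) then true else false)
                   (map (fun cw => conv (snd cw)) P)).
  assert (HinF : forall z, In z F <-> In z (map (fun cw => conv (snd cw)) P) /\ zigzag G L z /\ good z).
  { intros z. unfold F. rewrite filter_In.
    destruct excluded_middle_informative; split; intros; intuition; discriminate. }
  exists F. split; [|split].
  - intros z Hz. apply HinF in Hz. tauto.
  - intros z Hz. apply HinF in Hz. destruct Hz as [_ [_ Hg]]. exact Hg.
  - intros b. split.
    + intros [Lb [Hrb Ltb]]. destruct (Key b Lb Hrb Ltb) as [cw [Hcw Hw]].
      destruct (HPa cw Hcw) as [Hne Hlet].
      assert (Hp : phi G L (conv (snd cw)) b (gmul t b)) by (apply conv_phi; auto).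
      exists (conv (snd cw)). split; [|exists (gmul t b); auto].
      apply HinF. split; [apply in_map_iff; eauto|]. split.
      * split. apply conv_nil; auto. eapply phi_zz; eauto. apply conv_L; auto.
      * destruct (rigid (conv (snd cw))) as [g Hg]. apply conv_nil; auto.
        destruct (Hg _ _ Hp) as [Hbg Htb].
        assert (Etg : t = g).
        { rewrite <- (gl3 t b) by auto. rewrite <- (gl3 g b) by auto. congruence. }
        subst g. intros x y Hxy. apply Hg; auto.
    + intros [z [Hz [y Hp]]]. apply HinF in Hz. destruct Hz as [_ [[Hne _] Hg]].
      destruct (Hg _ _ Hp) as [Hr Hy]. destruct (phi_L z Hne _ _ Hp) as [Lb Ly].
      subst y. auto.
Qed.

End S.

Theorem mainTheorem18 (G : Groupoid) (L : G -> Prop) (HL : Subcat G L) (t : G) :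
  in_W0 G L t <->
  exists F : list (list (G * G)),
    (forall z, In z F -> zigzag G L z) /\
    (forall z, In z F -> forall b y, phi G L z b y -> gr b = gs t /\ y = gmul t b) /\
    (forall b, (L b /\ gr b = gs t /\ L (gmul t b)) <->
               exists z, In z F /\ Adom G L z b).
Proof.
  split; [apply dir1 | apply dir2]; auto.
Qed.
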